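(* Let $\sigma_1,\sigma_2>0$, $\beta\in(0,1)$. Suppose $k:\mathbb{S}^1\times[0,T)\to\mathbb{R}$ satisfies: $k\in C^{2+\beta,1+\beta}(\mathbb{S}^1\times[0,T-\varepsilon])$ for all $\varepsilon>0$; $k_t=\sigma_1k^2k_{\theta\theta}+\sigma_1k^3+\sigma_2k^2$; $k(\cdot,0)=\psi\in C^{1+\beta}(\mathbb{S}^1)$ strictly positive with $\int_0^{2\pi}\frac{\cos\theta}{\psi}d\theta=\int_0^{2\pi}\frac{\sin\theta}{\psi}d\theta=0$; and $k(\theta,0)>k_0>0$. Suppose that for all $t\in[0,T)$, $$\int_0^{2\pi}\log k(\theta,t)\,d\theta\le C_1.$$ Then for all $t\in[0,T)$, $$k_{\max}(t)\le 2e^{4(C_1+2\pi|\log k_0|)\left(\sqrt{2\pi}+\sigma_2\sqrt{\frac{\pi T}{\sigma_1}}\right)^2}+\left(\sqrt{2\pi}+\sigma_2\sqrt{\frac{\pi T}{\sigma_1}}\right)^{-1}\sqrt{\int_0^{2\pi}k_\theta^2-k^2\,d\theta\Big|_{t=0}}.$$ In particular $k$ is uniformly bounded on $\mathbb{S}^1\times[0,T)$.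
   Context: $\theta\in[0,2\pi)$ is the tangent angle parameter of the associated family of convex closed curves moving by $\partial_t\gamma=(\sigma_1k+\sigma_2)\nu$, and $k_{\max}(t)=\max_\theta k(\theta,t)$. *)

(* Defs.v *)
From Stdlib Require Import Reals Lra.
From Coquelicot Require Import Coquelicot.
Open Scope R_scope.

(* A function on S^1 x [0,T) is represented as k : R -> R -> R (theta, t),
   2*PI-periodic in theta. *)

Definition d_th (k : R -> R -> R) (th t : R) : R := Derive (fun x => k x t) th.
Definition d_t (k : R -> R -> R) (th t : R) : R := Derive (fun s => k th s) t.

(* x^beta for x >= 0 (Stdlib's Rpower 0 b = 1, so treat 0 separately) *)
Definition hpow (x b : R) : R := if Rle_dec x 0 then 0 else Rpower x b.

Definition holder_on (beta M : R) (I : R -> Prop) (f : R -> R -> R) : Prop :=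
  (forall th t, I t -> Rabs (f th t) <= M) /\
  (forall th t th' t', I t -> I t' ->
     Rabs (f th t - f th' t') <= M * (hpow (Rabs (th - th')) beta
                                      + hpow (Rabs (t - t')) beta)).

(* k in C^{2+beta,1+beta}(S^1 x [0,tau]): k is twice differentiable in theta,
   differentiable in t (for t in (0,tau]; the derivative extends to t=0 by the
   Hoelder bound), and k, k_theta, k_thetatheta, k_t are bounded and
   beta-Hoelder on S^1 x [0,tau] (resp. S^1 x (0,tau] for k_t). *)
Definition C2b1b (beta tau : R) (k : R -> R -> R) : Prop :=
  (forall th t, 0 <= t <= tau ->
     ex_derive (fun x => k x t) th /\ ex_derive (fun x => d_th k x t) th) /\
  (forall th t, 0 < t <= tau -> ex_derive (fun s => k th s) t) /\
  exists M : R,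
    holder_on beta M (fun t => 0 <= t <= tau) k /\
    holder_on beta M (fun t => 0 <= t <= tau) (d_th k) /\
    holder_on beta M (fun t => 0 <= t <= tau) (d_th (d_th k)) /\
    holder_on beta M (fun t => 0 < t <= tau) (d_t k).

Definition C1b (beta : R) (psi : R -> R) : Prop :=
  (forall th, psi (th + 2 * PI) = psi th) /\
  (forall th, ex_derive psi th) /\
  exists M : R,
    (forall th, Rabs (psi th) <= M) /\
    (forall th, Rabs (Derive psi th) <= M) /\
    (forall th th', Rabs (Derive psi th - Derive psi th')
                    <= M * hpow (Rabs (th - th')) beta).

(* Main.v *)
Require Import Defs.
From Stdlib Require Import Reals.
From Coquelicot Require Import Coquelicot.
From Stdlib Require Import Lra ZArith Lia Classical IndefiniteDescription.
Open Scope R_scope.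

Lemma hpow_nonneg x b : 0 <= hpow x b.
Proof. unfold hpow. destruct (Rle_dec x 0). lra. unfold Rpower. left; apply exp_pos. Qed.

Lemma hpow_0 b : hpow 0 b = 0.
Proof. unfold hpow. destruct (Rle_dec 0 0); lra. Qed.

Lemma hpow_mono x y b : 0 < b -> 0 <= x <= y -> hpow x b <= hpow y b.
Proof.
  intros Hb [Hx Hxy]. unfold hpow.
  destruct (Rle_dec x 0); destruct (Rle_dec y 0); try lra.
  - unfold Rpower; left; apply exp_pos.
  - unfold Rpower. destruct (Req_dec x y) as [->|Hne]. lra.
    left. apply exp_increasing. apply Rmult_lt_compat_l; auto.
    apply ln_increasing; lra.
Qed.

Lemma hpow_small b : 0 < b -> forall eps, 0 < eps ->
  exists delta, 0 < delta /\ forall x, 0 <= x < delta -> hpow x b < eps.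
Proof.
  intros Hb eps He. exists (Rpower eps (/ b)). split.
  - unfold Rpower; apply exp_pos.
  - intros x [Hx0 Hx]. unfold hpow. destruct (Rle_dec x 0). lra.
    unfold Rpower in *. rewrite <- (exp_ln eps) by lra.
    apply exp_increasing.
    assert (ln x < ln (exp (/ b * ln eps))) by (apply ln_increasing; lra).
    rewrite ln_exp in H.
    apply Rmult_lt_compat_l with (r := b) in H; auto.
    replace (b * (/ b * ln eps)) with (ln eps) in H by (field; lra). lra.
Qed.

Lemma mod_cont (f : R -> R) x C b : 0 < b ->
  (forall y, Rabs (f y - f x) <= C * hpow (Rabs (y - x)) b) -> continuity_pt f x.
Proof.
  intros Hb H. apply continuity_pt_locally. intros eps.
  destruct (hpow_small b Hb (eps / (Rabs C + 1))) as [d [Hd Hd']].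
  { apply Rdiv_lt_0_compat. apply cond_pos. pose proof (Rabs_pos C); lra. }
  exists (mkposreal d Hd). intros y Hy. unfold ball in Hy; simpl in Hy.
  unfold AbsRing_ball, abs, minus, plus, opp in Hy; simpl in Hy.
  eapply Rle_lt_trans. apply H.
  assert (Hh := Hd' (Rabs (y - x)) (conj (Rabs_pos _) Hy)).
  pose proof (hpow_nonneg (Rabs (y - x)) b).
  assert (C * hpow (Rabs (y - x)) b <= (Rabs C + 1) * hpow (Rabs (y - x)) b).
  { apply Rmult_le_compat_r; auto. pose proof (Rle_abs C); lra. }
  assert ((Rabs C + 1) * hpow (Rabs (y - x)) b < (Rabs C + 1) * (eps / (Rabs C + 1))).
  { apply Rmult_lt_compat_l; auto. pose proof (Rabs_pos C); lra. }
  replace ((Rabs C + 1) * (eps / (Rabs C + 1))) with (pos eps) in H2.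
  lra. field. pose proof (Rabs_pos C); lra.
Qed.

Lemma exR (f : R -> R) a b : (forall x, continuity_pt f x) -> ex_RInt f a b.
Proof.
  intros H. apply (@ex_RInt_continuous R_CompleteNormedModule). intros z _. apply continuity_pt_filterlim. apply H.
Qed.

Lemma cp_plus f g x : continuity_pt f x -> continuity_pt g x -> continuity_pt (fun y => f y + g y) x.
Proof. intros. exact (continuity_pt_plus f g x H H0). Qed.
Lemma cp_minus f g x : continuity_pt f x -> continuity_pt g x -> continuity_pt (fun y => f y - g y) x.
Proof. intros. exact (continuity_pt_minus f g x H H0). Qed.
Lemma cp_mult f g x : continuity_pt f x -> continuity_pt g x -> continuity_pt (fun y => f y * g y) x.
Proof. intros. exact (continuity_pt_mult f g x H H0). Qed.
Lemma cp_const c x : continuity_pt (fun _ => c) x.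
Proof. apply continuity_pt_const. intros a b; reflexivity. Qed.
Lemma cp_sq f x : continuity_pt f x -> continuity_pt (fun y => f y ^ 2) x.
Proof. intros. apply (continuity_pt_ext (fun y => f y * f y)). intros; ring. apply cp_mult; auto. Qed.

Lemma RInt_plusR f g a b : ex_RInt f a b -> ex_RInt g a b ->
  RInt (fun x => f x + g x) a b = RInt f a b + RInt g a b.
Proof. intros. exact (RInt_plus f g a b H H0). Qed.
Lemma RInt_minusR f g a b : ex_RInt f a b -> ex_RInt g a b ->
  RInt (fun x => f x - g x) a b = RInt f a b - RInt g a b.
Proof. intros. exact (RInt_minus f g a b H H0). Qed.
Lemma RInt_scalR f a b c : ex_RInt f a b ->
  RInt (fun x => c * f x) a b = c * RInt f a b.
Proof. intros. exact (RInt_scal f a b c H). Qed.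
Lemma RInt_constR a b c : RInt (fun _ => c) a b = (b - a) * c.
Proof. rewrite RInt_const. reflexivity. Qed.

Lemma RInt_extR (f g : R -> R) a b : (forall x, Rmin a b < x < Rmax a b -> f x = g x) ->
  RInt f a b = RInt g a b.
Proof. intros. exact (RInt_ext f g a b H). Qed.

Lemma cp_of_derive f x l : is_derive f x l -> continuity_pt f x.
Proof.
  intros H. apply continuity_pt_filterlim. apply (ex_derive_continuous f x). exists l; auto.
Qed.

Lemma ibp_per (f f' g g' g'' : R -> R) P :
  (forall x, is_derive f x (f' x)) -> (forall x, is_derive g x (g' x)) ->
  (forall x, is_derive g' x (g'' x)) ->
  (forall x, continuity_pt f' x) -> (forall x, continuity_pt g'' x) ->
  f P = f 0 -> g' P = g' 0 ->
  RInt (fun x => f' x * g' x) 0 P = - RInt (fun x => f x * g'' x) 0 P.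
Proof.
  intros Hf Hg Hg' Cf' Cg'' Pf Pg.
  assert (Cf : forall x, continuity_pt f x) by (intros; eapply cp_of_derive; eauto).
  assert (Cg' : forall x, continuity_pt g' x) by (intros; eapply cp_of_derive; eauto).
  assert (HI : is_RInt (fun x => f' x * g' x + f x * g'' x) 0 P
                 (minus (f P * g' P) (f 0 * g' 0))).
  { apply (is_RInt_derive (fun x => f x * g' x)).
    - intros x _. apply (is_derive_mult f g' x (f' x) (g'' x) (Hf x) (Hg' x)).
      intros; apply Rmult_comm.
    - intros x _. apply continuity_pt_filterlim.
      apply (cp_plus (fun x => f' x * g' x) (fun x => f x * g'' x)); apply cp_mult; auto. }
  apply (@is_RInt_unique R_CompleteNormedModule) in HI.
  rewrite RInt_plusR in HI; try (apply exR; intros; apply cp_mult; auto).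
  rewrite Pf, Pg in HI. unfold minus, plus, opp in HI; simpl in HI. lra.
Qed.

Lemma RInt_per (F : R -> R) P c : (forall x, continuity_pt F x) ->
  (forall x, F (x + P) = F x) -> RInt F (c - P) c = RInt F 0 P.
Proof.
  intros C HP.
  assert (E1 : RInt F P c = RInt F 0 (c - P)).
  { assert (H := RInt_comp_lin F 1 P 0 (c - P)).
    replace (1 * 0 + P) with P in H by ring.
    replace (1 * (c - P) + P) with c in H by ring.
    rewrite <- H by (apply exR; auto).
    apply RInt_extR. intros x _. unfold scal; simpl; unfold mult; simpl.
    replace (1 * x + P) with (x + P) by ring. rewrite HP. ring. }
  assert (ch1 := RInt_Chasles F (c - P) 0 c (exR _ _ _ C) (exR _ _ _ C)).
  assert (ch2 := RInt_Chasles F 0 P c (exR _ _ _ C) (exR _ _ _ C)).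
  assert (ch3 := RInt_Chasles F (c - P) 0 (c - P) (exR _ _ _ C) (exR _ _ _ C)).
  rewrite RInt_point in ch3.
  unfold plus in *; simpl in *. unfold zero in ch3; simpl in ch3. lra.
Qed.

Lemma RInt_ge0 f a b : a <= b -> ex_RInt f a b -> (forall x, a < x < b -> 0 <= f x) ->
  0 <= RInt f a b.
Proof.
  intros Hab Hex H. assert (H0 := RInt_le (fun _ => 0) f a b Hab (ex_RInt_const _ _ _) Hex H).
  rewrite RInt_constR in H0. lra.
Qed.

Lemma RInt_CS g a b : a < b -> (forall x, continuity_pt g x) ->
  (RInt g a b) ^ 2 <= (b - a) * RInt (fun x => g x ^ 2) a b.
Proof.
  intros Hab C.
  set (I := RInt g a b). set (J := RInt (fun x => g x ^ 2) a b).
  set (lam := I / (b - a)).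
  assert (H : 0 <= RInt (fun x => (g x - lam) ^ 2) a b).
  { apply RInt_ge0. lra. apply exR; intros; apply cp_sq, cp_minus; auto; apply cp_const.
    intros; apply pow2_ge_0. }
  rewrite (RInt_extR _ (fun x => (g x ^ 2 + (-2 * lam) * g x) + lam ^ 2)) in H by (intros; ring).
  rewrite RInt_plusR in H.
  2:{ apply exR; intros; apply cp_plus; [apply cp_sq; auto|]. apply cp_mult; auto; apply cp_const. }
  2:{ apply ex_RInt_const. }
  rewrite RInt_plusR in H.
  2:{ apply exR; intros; apply cp_sq; auto. }
  2:{ apply exR; intros; apply cp_mult; auto; apply cp_const. }
  rewrite RInt_scalR in H by (apply exR; auto).
  rewrite RInt_constR in H. fold I J in H. unfold lam in H.
  assert (0 < b - a) by lra.
  replace (J + -2 * (I / (b - a)) * I + (b - a) * (I / (b - a)) ^ 2)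
    with (J - I ^ 2 / (b - a)) in H by (field; lra).
  assert (I ^ 2 / (b - a) <= J) by lra.
  apply Rmult_le_compat_l with (r := b - a) in H1; [|lra].
  replace ((b - a) * (I ^ 2 / (b - a))) with (I ^ 2) in H1 by (field; lra). lra.
Qed.

Lemma RInt_pos_lb f a b m : a <= b -> ex_RInt f a b -> (forall x, a < x < b -> m <= f x) ->
  (b - a) * m <= RInt f a b.
Proof.
  intros Hab Hex H. assert (H0 := RInt_le (fun _ => m) f a b Hab (ex_RInt_const _ _ _) Hex H).
  rewrite RInt_constR in H0. lra.
Qed.

Lemma min_d1 f x d : is_derive f x d -> (forall y, f x <= f y) -> d = 0.
Proof.
  intros H Hm. apply is_derive_Reals in H.
  destruct (Rtotal_order d 0) as [Hd|[Hd|Hd]]; auto; exfalso.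
  - destruct (H (- d / 2)) as [del Hdel]. lra.
    assert (Hh : del / 2 <> 0) by (pose proof (cond_pos del); lra).
    specialize (Hdel (del / 2) Hh).
    assert (Rabs (del / 2) < del) by (pose proof (cond_pos del); rewrite Rabs_pos_eq; lra).
    specialize (Hdel H0). apply Rabs_lt_between in Hdel.
    specialize (Hm (x + del / 2)).
    assert (0 <= (f (x + del / 2) - f x) / (del / 2)).
    { apply Rdiv_le_0_compat; pose proof (cond_pos del); lra. }
    lra.
  - destruct (H (d / 2)) as [del Hdel]. lra.
    assert (Hh : - (del / 2) <> 0) by (pose proof (cond_pos del); lra).
    specialize (Hdel (- (del / 2)) Hh).
    assert (Rabs (- (del / 2)) < del) by (pose proof (cond_pos del); rewrite Rabs_Ropp, Rabs_pos_eq; lra).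
    specialize (Hdel H0). apply Rabs_lt_between in Hdel.
    specialize (Hm (x + - (del / 2))).
    assert ((f (x + - (del / 2)) - f x) / - (del / 2) <= 0).
    { unfold Rdiv. rewrite <- Ropp_inv_permute by (pose proof (cond_pos del); lra).
      assert (0 < / (del / 2)) by (apply Rinv_0_lt_compat; pose proof (cond_pos del); lra).
      nra. }
    lra.
Qed.

Lemma left_deriv_sign f t l del : is_derive f t l -> 0 < del ->
  (forall r, t - del < r < t -> f t <= f r) -> l <= 0.
Proof.
  intros H Hdel Hm. apply is_derive_Reals in H.
  destruct (Rle_or_lt l 0) as [|Hl]; auto; exfalso.
  destruct (H (l / 2)) as [d Hd]. lra.
  set (h := - (Rmin del d / 2)).
  assert (Hmin : 0 < Rmin del d) by (apply Rmin_pos; auto; apply cond_pos).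
  assert (Hh : h <> 0) by (unfold h; lra).
  assert (Rabs h < d).
  { unfold h. rewrite Rabs_Ropp, Rabs_pos_eq by lra. pose proof (Rmin_r del d); lra. }
  specialize (Hd h Hh H0). apply Rabs_lt_between in Hd.
  assert (f t <= f (t + h)).
  { apply Hm. unfold h. pose proof (Rmin_l del d). lra. }
  assert ((f (t + h) - f t) / h <= 0).
  { unfold Rdiv. assert (/ h < 0) by (apply Rinv_lt_0_compat; unfold h; lra). nra. }
  lra.
Qed.

Lemma min_d2 f f' x c : (forall y, is_derive f y (f' y)) -> is_derive f' x c ->
  (forall y, f x <= f y) -> 0 <= c.
Proof.
  intros Hf Hf' Hm.
  assert (Hz : f' x = 0) by (eapply min_d1; eauto).
  destruct (Rle_or_lt 0 c) as [|Hc]; auto; exfalso.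
  apply is_derive_Reals in Hf'. destruct (Hf' (- c / 2)) as [d Hd]. lra.
  assert (Hneg : forall h, 0 < h < d -> f' (x + h) < 0).
  { intros h Hh. assert (h <> 0) by lra.
    assert (Rabs h < d) by (rewrite Rabs_pos_eq; lra).
    specialize (Hd h H H0). rewrite Hz in Hd. apply Rabs_lt_between in Hd.
    assert (Hq : (f' (x + h) - 0) / h < 0) by lra.
    unfold Rdiv in Hq. assert (0 < / h) by (apply Rinv_0_lt_compat; lra).
    destruct (Rle_or_lt 0 (f' (x + h))); auto. nra. }
  set (h0 := d / 2). assert (Hd0 : 0 < d) by apply cond_pos.
  destruct (MVT_gen f (x + h0 / 2) (x + h0) f') as [xi [Hxi Eq]].
  { intros; apply Hf. }
  { intros; eapply cp_of_derive; apply Hf. }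
  rewrite Rmin_left in Hxi by (unfold h0; lra). rewrite Rmax_right in Hxi by (unfold h0; lra).
  destruct (MVT_gen f x (x + h0 / 2) f') as [xi2 [Hxi2 Eq2]].
  { intros; apply Hf. }
  { intros; eapply cp_of_derive; apply Hf. }
  rewrite Rmin_left in Hxi2 by (unfold h0; lra). rewrite Rmax_right in Hxi2 by (unfold h0; lra).
  assert (A1 : f' xi < 0).
  { replace xi with (x + (xi - x)) by ring. apply Hneg. unfold h0 in *; lra. }
  assert (A2 : f' xi2 <= 0).
  { destruct (Req_dec xi2 x) as [->|Hne]. lra.
    replace xi2 with (x + (xi2 - x)) by ring. left; apply Hneg. unfold h0 in *; lra. }
  assert (f (x + h0) - f (x + h0 / 2) < 0).
  { rewrite Eq. assert (0 < x + h0 - (x + h0 / 2)) by (unfold h0; lra). nra. }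
  assert (f (x + h0 / 2) - f x <= 0).
  { rewrite Eq2. replace (x + h0 / 2 - x) with (h0 / 2) by ring.
    assert (0 < h0 / 2) by (unfold h0; lra). nra. }
  specialize (Hm (x + h0)). lra.
Qed.

Lemma per_nat (f : R -> R) P : (forall x, f (x + P) = f x) ->
  forall n x, f (x + INR n * P) = f x.
Proof.
  intros H n. induction n as [|n IH]; intros x.
  - simpl. f_equal; ring.
  - rewrite S_INR. replace (x + (INR n + 1) * P) with ((x + INR n * P) + P) by ring.
    rewrite H. apply IH.
Qed.

Lemma per_red (f : R -> R) P : 0 < P -> (forall x, f (x + P) = f x) ->
  forall x, exists y, 0 <= y <= P /\ f x = f y.
Proof.
  intros HP H x.
  destruct (archimed (x / P)) as [A1 A2].
  set (z := (up (x / P) - 1)%Z).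
  assert (Hz : IZR z = IZR (up (x / P)) - 1) by (unfold z; rewrite minus_IZR; reflexivity).
  exists (x - IZR z * P). split.
  - assert (IZR z <= x / P) by lra. assert (x / P - 1 < IZR z) by lra.
    apply Rmult_le_compat_r with (r := P) in H0; [|lra].
    apply Rmult_lt_compat_r with (r := P) in H1; [|lra].
    replace (x / P * P) with x in * by (field; lra).
    replace ((x / P - 1) * P) with (x - P) in * by (field; lra). lra.
  - destruct (Z_le_gt_dec 0 z) as [Hp|Hn].
    + rewrite <- (Z2Nat.id z Hp). rewrite <- INR_IZR_INZ.
      rewrite <- (per_nat f P H (Z.to_nat z) (x - INR (Z.to_nat z) * P)).
      f_equal; ring.
    + assert (Hz' : z = (- Z.of_nat (Z.to_nat (- z)))%Z) by (rewrite Z2Nat.id; lia).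
      rewrite Hz', opp_IZR, <- INR_IZR_INZ.
      rewrite <- (per_nat f P H (Z.to_nat (- z)) x). f_equal; ring.
Qed.

Lemma isd_plus f g x a b : is_derive f x a -> is_derive g x b ->
  is_derive (fun y => f y + g y) x (a + b).
Proof. intros. exact (is_derive_plus f g x a b H H0). Qed.
Lemma isd_minus f g x a b : is_derive f x a -> is_derive g x b ->
  is_derive (fun y => f y - g y) x (a - b).
Proof. intros. exact (is_derive_minus f g x a b H H0). Qed.

Lemma Derive_per f P x : (forall y, f (y + P) = f y) -> Derive f (x + P) = Derive f x.
Proof.
  intros H. unfold Derive. f_equal. apply Lim_ext. intros h.
  replace (x + P + h) with ((x + h) + P) by ring. rewrite !H. reflexivity.
Qed.

Section Main.
Variables (sigma1 sigma2 beta tau k0 C1 M0 : R) (k : R -> R -> R).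
Hypothesis Hs1 : 0 < sigma1.
Hypothesis Hs2 : 0 < sigma2.
Hypothesis Hb : 0 < beta < 1.
Hypothesis Htau : 0 < tau.
Hypothesis Hper : forall th t, 0 <= t <= tau -> k (th + 2 * PI) t = k th t.
Hypothesis HD1 : forall th t, 0 <= t <= tau ->
     ex_derive (fun x => k x t) th /\ ex_derive (fun x => d_th k x t) th.
Hypothesis HDt : forall th t, 0 < t <= tau -> ex_derive (fun s => k th s) t.
Hypothesis Hk : holder_on beta M0 (fun t => 0 <= t <= tau) k.
Hypothesis Hk1 : holder_on beta M0 (fun t => 0 <= t <= tau) (d_th k).
Hypothesis Hk2 : holder_on beta M0 (fun t => 0 <= t <= tau) (d_th (d_th k)).
Hypothesis Hkt : holder_on beta M0 (fun t => 0 < t <= tau) (d_t k).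
Hypothesis Hpde : forall th t, 0 < t <= tau ->
     d_t k th t = sigma1 * (k th t) ^ 2 * d_th (d_th k) th t
                  + sigma1 * (k th t) ^ 3 + sigma2 * (k th t) ^ 2.
Hypothesis Hk0 : 0 < k0.
Hypothesis Hinit : forall th, k0 < k th 0.
Hypothesis HC1 : forall t, 0 <= t <= tau -> RInt (fun th => ln (k th t)) 0 (2 * PI) <= C1.

Lemma PIpos2 : 0 < 2 * PI.
Proof. pose proof PI_RGT_0; lra. Qed.

Lemma isK1 t x : 0 <= t <= tau -> is_derive (fun x => k x t) x (d_th k x t).
Proof. intros H. unfold d_th. apply Derive_correct. exact (proj1 (HD1 x t H)). Qed.
Lemma isK2 t x : 0 <= t <= tau -> is_derive (fun x => d_th k x t) x (d_th (d_th k) x t).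
Proof. intros H. change (d_th (d_th k) x t) with (Derive (fun x => d_th k x t) x). apply Derive_correct. exact (proj2 (HD1 x t H)). Qed.
Lemma isKt t x : 0 < t <= tau -> is_derive (fun s => k x s) t (d_t k x t).
Proof. intros H. unfold d_t. apply Derive_correct. exact (HDt x t H). Qed.

Lemma hmod_space (I : R -> Prop) f t x y : holder_on beta M0 I f -> I t ->
  Rabs (f y t - f x t) <= M0 * hpow (Rabs (y - x)) beta.
Proof.
  intros [_ H] It. specialize (H y t x t It It).
  replace (t - t) with 0 in H by ring. rewrite Rabs_R0, hpow_0, Rplus_0_r in H. auto.
Qed.
Lemma hmod_time (I : R -> Prop) f s t x : holder_on beta M0 I f -> I s -> I t ->
  Rabs (f x s - f x t) <= M0 * hpow (Rabs (s - t)) beta.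
Proof.
  intros [_ H] Is It. specialize (H x s x t Is It).
  replace (x - x) with 0 in H by ring. rewrite Rabs_R0, hpow_0, Rplus_0_l in H. auto.
Qed.
Lemma hbound (I : R -> Prop) f t x : holder_on beta M0 I f -> I t -> Rabs (f x t) <= M0.
Proof. intros [H _] It. auto. Qed.

Lemma cK t x : 0 <= t <= tau -> continuity_pt (fun x => k x t) x.
Proof. intros. eapply cp_of_derive. apply isK1; auto. Qed.
Lemma cK1 t x : 0 <= t <= tau -> continuity_pt (fun x => d_th k x t) x.
Proof. intros. eapply cp_of_derive. apply isK2; auto. Qed.
Lemma cK2 t x : 0 <= t <= tau -> continuity_pt (fun x => d_th (d_th k) x t) x.
Proof.
  intros. apply (mod_cont _ x M0 beta). lra. intros y.
  apply (hmod_space (fun t => 0 <= t <= tau)); auto.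
Qed.
Lemma cKt t x : 0 < t <= tau -> continuity_pt (fun x => d_t k x t) x.
Proof.
  intros. apply (mod_cont _ x M0 beta). lra. intros y.
  apply (hmod_space (fun t => 0 < t <= tau)); auto.
Qed.

Lemma per1 t x : 0 <= t <= tau -> d_th k (x + 2 * PI) t = d_th k x t.
Proof. intros. unfold d_th. apply Derive_per. intros; apply Hper; auto. Qed.
Lemma per2 t x : 0 <= t <= tau -> d_th (d_th k) (x + 2 * PI) t = d_th (d_th k) x t.
Proof. intros. unfold d_th at 1. apply Derive_per. intros; apply per1; auto. Qed.

Definition E t := RInt (fun x => d_th k x t ^ 2 - k x t ^ 2) 0 (2 * PI).

Lemma Ediff s t : 0 <= s <= tau -> 0 <= t <= tau ->
  E s - E t = - RInt (fun x => (k x s - k x t) *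
     (d_th (d_th k) x s + d_th (d_th k) x t + k x s + k x t)) 0 (2 * PI).
Proof.
  intros Hs Ht. unfold E.
  assert (C : forall u, 0 <= u <= tau -> forall x,
     continuity_pt (fun x => d_th k x u ^ 2 - k x u ^ 2) x).
  { intros. apply cp_minus; apply cp_sq; [apply cK1|apply cK]; auto. }
  rewrite <- RInt_minusR by (apply exR; auto).
  rewrite (RInt_extR _ (fun x => (d_th k x s - d_th k x t) * (d_th k x s + d_th k x t)
                   - (k x s - k x t) * (k x s + k x t))) by (intros; ring).
  rewrite RInt_minusR.
  2:{ apply exR; intros; apply cp_mult; [apply cp_minus|apply cp_plus]; apply cK1; auto. }
  2:{ apply exR; intros; apply cp_mult; [apply cp_minus|apply cp_plus]; apply cK; auto. }
  rewrite (ibp_per (fun x => k x s - k x t) (fun x => d_th k x s - d_th k x t)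
             (fun x => k x s + k x t) (fun x => d_th k x s + d_th k x t)
             (fun x => d_th (d_th k) x s + d_th (d_th k) x t)).
  - assert (Hm : forall a b, -a - b = -(a+b)) by (intros; ring). rewrite Hm. f_equal.
    rewrite <- RInt_plusR.
    + apply RInt_extR. intros; ring.
    + apply exR; intros; apply cp_mult; [apply cp_minus|apply cp_plus]; try apply cK2; try apply cK; auto.
    + apply exR; intros; apply cp_mult; [apply cp_minus|apply cp_plus]; apply cK; auto.
  - intros; apply isd_minus; apply isK1; auto.
  - intros; apply isd_plus; apply isK1; auto.
  - intros; apply isd_plus; apply isK2; auto.
  - intros; apply cp_minus; apply cK1; auto.
  - intros; apply cp_plus; apply cK2; auto.
  - simpl. rewrite <- (Rplus_0_l (2 * PI)). rewrite !Hper; auto.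
  - simpl. rewrite <- (Rplus_0_l (2 * PI)). rewrite !per1; auto.
Qed.


Lemma M0pos : 0 <= M0.
Proof. destruct Hk as [H _]. specialize (H 0 0). pose proof (Rabs_pos (k 0 0)). assert (0 <= 0 <= tau) by lra. specialize (H H1). lra. Qed.

Lemma bnd_aux a b W w2 A1 A2 Bw Bb : Rabs (a - b) <= A1 -> Rabs W <= Bw -> Rabs b <= Bb ->
  Rabs (W - w2) <= A2 -> Rabs (- a * W - (- b * w2)) <= A1 * Bw + Bb * A2.
Proof.
  intros H1 H2 H3 H4.
  replace (- a * W - (- b * w2)) with (- ((a - b) * W) + - (b * (W - w2))) by ring.
  eapply Rle_trans. apply Rabs_triang. rewrite !Rabs_Ropp, !Rabs_mult.
  apply Rplus_le_compat; apply Rmult_le_compat; auto using Rabs_pos.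
Qed.

Lemma Ederiv t : 0 < t < tau ->
  is_derive E t (RInt (fun x => - 2 * d_t k x t * (d_th (d_th k) x t + k x t)) 0 (2 * PI)).
Proof.
  intros Ht. apply is_derive_Reals. intros eps Heps.
  pose proof M0pos as HM. pose proof PIpos2 as HP.
  set (Cst := 2 * PI * (6 * (M0 * M0)) + 1).
  assert (HC : 0 < Cst) by (unfold Cst; pose proof (Rmult_le_pos _ _ HM HM); nra).
  destruct (hpow_small beta (proj1 Hb) (eps / Cst)) as [d1 [Hd1 Hd1']].
  { apply Rdiv_lt_0_compat; auto. }
  assert (Hdp : 0 < Rmin d1 (Rmin t (tau - t))).
  { apply Rmin_pos; auto. apply Rmin_pos; lra. }
  exists (mkposreal _ Hdp). intros h Hh0 Hh. simpl in Hh.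
  assert (Hh1 : Rabs h < d1) by (pose proof (Rmin_l d1 (Rmin t (tau - t))); lra).
  assert (Hh2 : Rabs h < t) by (pose proof (Rmin_r d1 (Rmin t (tau - t))); pose proof (Rmin_l t (tau - t)); lra).
  assert (Hh3 : Rabs h < tau - t) by (pose proof (Rmin_r d1 (Rmin t (tau - t))); pose proof (Rmin_r t (tau - t)); lra).
  apply Rabs_lt_between in Hh2. apply Rabs_lt_between in Hh3.
  assert (Hs : 0 < t + h < tau) by lra.
  set (W := fun x => d_th (d_th k) x (t + h) + d_th (d_th k) x t + k x (t + h) + k x t).
  set (w := fun x => d_th (d_th k) x t + k x t).
  assert (CW : forall x, continuity_pt W x).
  { intros; unfold W; repeat apply cp_plus; try apply cK2; try apply cK; lra. }
  assert (Cu : forall x, continuity_pt (fun x => k x (t + h) - k x t) x).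
  { intros; apply cp_minus; apply cK; lra. }
  assert (CG : forall x, continuity_pt (fun x => - 2 * d_t k x t * w x) x).
  { intros; apply cp_mult. apply cp_mult. apply cp_const. apply cKt; lra.
    unfold w; apply cp_plus; [apply cK2|apply cK]; lra. }
  assert (Eq : (E (t + h) - E t) / h - RInt (fun x => - 2 * d_t k x t * (d_th (d_th k) x t + k x t)) 0 (2 * PI)
     = RInt (fun x => (- / h) * ((k x (t + h) - k x t) * W x) - (- 2 * d_t k x t * w x)) 0 (2 * PI)).
  { rewrite Ediff by lra. rewrite RInt_minusR.
    2:{ apply exR; intros; apply cp_mult; [apply cp_const|]. apply cp_mult; auto. }
    2:{ apply exR; auto. }
    rewrite RInt_scalR by (apply exR; intros; apply cp_mult; auto).
    unfold W, w. field. auto. }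
  rewrite Eq. clear Eq.
  eapply Rle_lt_trans. apply abs_RInt_le_const with (M := 6 * (M0 * M0) * hpow (Rabs h) beta).
  lra.
  { apply exR; intros; apply cp_minus; auto. apply cp_mult; [apply cp_const|]. apply cp_mult; auto. }
  - intros x _.
    destruct (MVT_gen (fun s => k x s) t (t + h) (fun s => d_t k x s)) as [xi [Hxi Hmvt]].
    { intros y Hy. apply isKt. pose proof (Rmin_l t (t + h)); pose proof (Rmin_r t (t + h));
      pose proof (Rmax_l t (t + h)); pose proof (Rmax_r t (t + h));
      destruct (Rle_dec t (t + h)); [rewrite Rmin_left, Rmax_right in Hy by lra | rewrite Rmin_right, Rmax_left in Hy by lra]; lra. }
    { intros y Hy. eapply cp_of_derive. apply isKt.
      destruct (Rle_dec t (t + h)); [rewrite Rmin_left, Rmax_right in Hy by lra | rewrite Rmin_right, Rmax_left in Hy by lra]; lra. }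
    assert (Hxi' : 0 < xi <= tau /\ Rabs (xi - t) <= Rabs h).
    { destruct (Rle_dec t (t + h)); [rewrite Rmin_left, Rmax_right in Hxi by lra | rewrite Rmin_right, Rmax_left in Hxi by lra];
      split; try lra; unfold Rabs; repeat destruct Rcase_abs; lra. }
    destruct Hxi' as [Hxi1 Hxi2].
    replace (- / h * ((k x (t + h) - k x t) * W x)) with (- (d_t k x xi) * W x).
    2:{ rewrite Hmvt. field. auto. }
    replace (6 * (M0 * M0) * hpow (Rabs h) beta) with
       ((M0 * hpow (Rabs h) beta) * (4 * M0) + M0 * (2 * M0 * hpow (Rabs h) beta)) by ring.
    replace (-2 * d_t k x t * w x) with (- d_t k x t * (2 * w x)) by ring.
    apply bnd_aux.
    + eapply Rle_trans. apply (hmod_time (fun t => 0 < t <= tau)); auto; lra.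
      apply Rmult_le_compat_l; auto. apply hpow_mono. lra. split; auto using Rabs_pos.
    + unfold W. eapply Rle_trans; [apply Rabs_triang|].
      eapply Rle_trans; [apply Rplus_le_compat_r; apply Rabs_triang|].
      eapply Rle_trans; [apply Rplus_le_compat_r; apply Rplus_le_compat_r; apply Rabs_triang|].
      assert (0 <= t + h <= tau) by lra. assert (0 <= t <= tau) by lra.
      pose proof (hbound _ _ (t + h) x Hk2 H). pose proof (hbound _ _ t x Hk2 H0).
      pose proof (hbound _ _ (t + h) x Hk H). pose proof (hbound _ _ t x Hk H0). lra.
    + apply (hbound (fun t => 0 < t <= tau)); auto. lra.
    + unfold W, w.
      replace (d_th (d_th k) x (t + h) + d_th (d_th k) x t + k x (t + h) + k x t -
               2 * (d_th (d_th k) x t + k x t)) with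
              ((d_th (d_th k) x (t + h) - d_th (d_th k) x t) + (k x (t + h) - k x t)) by ring.
      eapply Rle_trans; [apply Rabs_triang|].
      replace (t + h - t) with h by ring.
      pose proof (hmod_time (fun t => 0 <= t <= tau) _ (t + h) t x Hk2 ltac:(lra) ltac:(lra)).
      pose proof (hmod_time (fun t => 0 <= t <= tau) _ (t + h) t x Hk ltac:(lra) ltac:(lra)).
      replace (t + h - t) with h in * by ring. lra.
  - assert (hpow (Rabs h) beta < eps / Cst) by (apply Hd1'; split; auto using Rabs_pos).
    pose proof (hpow_nonneg (Rabs h) beta).
    assert (Cst * hpow (Rabs h) beta < eps).
    { apply Rmult_lt_compat_l with (r := Cst) in H; auto.
      replace (Cst * (eps / Cst)) with eps in H by (field; lra). lra. }
    unfold Cst in H1. assert (0 <= M0 * M0) by (apply Rmult_le_pos; auto). nra.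
Qed.


Lemma Ebound a b : 0 <= a <= tau -> 0 <= b <= tau ->
  Rabs (E a - E b) <= 2 * PI * (4 * (M0 * M0)) * hpow (Rabs (a - b)) beta.
Proof.
  intros Ha Hb'. rewrite Ediff by auto. rewrite Rabs_Ropp.
  eapply Rle_trans. apply abs_RInt_le_const with (M := M0 * hpow (Rabs (a - b)) beta * (4 * M0)).
  pose proof PIpos2; lra.
  { apply exR; intros; apply cp_mult; [apply cp_minus|]; try (apply cK; auto).
    repeat apply cp_plus; try apply cK2; try apply cK; auto. }
  - intros x _. rewrite Rabs_mult. apply Rmult_le_compat; auto using Rabs_pos.
    + apply (hmod_time (fun t => 0 <= t <= tau)); auto.
    + eapply Rle_trans; [apply Rabs_triang|].
      eapply Rle_trans; [apply Rplus_le_compat_r; apply Rabs_triang|].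
      eapply Rle_trans; [apply Rplus_le_compat_r; apply Rplus_le_compat_r; apply Rabs_triang|].
      pose proof (hbound _ _ a x Hk2 Ha). pose proof (hbound _ _ b x Hk2 Hb').
      pose proof (hbound _ _ a x Hk Ha). pose proof (hbound _ _ b x Hk Hb'). lra.
  - right. ring.
Qed.

Definition clamp s := Rmax 0 (Rmin s tau).
Lemma clamp_in s : 0 <= clamp s <= tau.
Proof. unfold clamp. unfold Rmax, Rmin. repeat destruct Rle_dec; lra. Qed.
Lemma clamp_id s : 0 <= s <= tau -> clamp s = s.
Proof. intros. unfold clamp. unfold Rmax, Rmin. repeat destruct Rle_dec; lra. Qed.
Lemma clamp_lip s r : Rabs (clamp s - clamp r) <= Rabs (s - r).
Proof. unfold clamp, Rmax, Rmin. repeat destruct Rle_dec; unfold Rabs; repeat destruct Rcase_abs; lra. Qed.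

Lemma Ec_cont s : continuity_pt (fun r => E (clamp r)) s.
Proof.
  apply (mod_cont _ s (2 * PI * (4 * (M0 * M0))) beta). lra.
  intros y. eapply Rle_trans. apply Ebound; apply clamp_in.
  apply Rmult_le_compat_l. pose proof PIpos2. pose proof M0pos. nra.
  apply hpow_mono. lra. split. apply Rabs_pos. apply clamp_lip.
Qed.

Lemma Eineq t0 Kb : 0 <= t0 <= tau -> (forall x s, 0 <= s <= t0 -> Rabs (k x s) <= Kb) ->
  E t0 <= E 0 + PI * sigma2 ^ 2 * Kb ^ 2 / sigma1 * t0.
Proof.
  intros Ht0 HK.
  destruct (Req_dec t0 0) as [->|Hnz]. lra.
  set (c := PI * sigma2 ^ 2 * Kb ^ 2 / sigma1).
  set (D := fun s => RInt (fun x => - 2 * d_t k x s * (d_th (d_th k) x s + k x s)) 0 (2 * PI)).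
  assert (HD : forall s, 0 < s < t0 -> D s <= c).
  { intros s Hs. unfold D.
    eapply Rle_trans. apply RInt_le with (g := fun _ => sigma2 ^ 2 * Kb ^ 2 / (2 * sigma1)).
    pose proof PIpos2; lra.
    { apply exR; intros; apply cp_mult. apply cp_mult. apply cp_const. apply cKt; lra.
      apply cp_plus; [apply cK2|apply cK]; lra. }
    apply ex_RInt_const.
    - intros x _. rewrite Hpde by lra.
      set (kk := k x s). set (w := d_th (d_th k) x s).
      assert (Hk2b : kk ^ 2 <= Kb ^ 2).
      { assert (Rabs kk <= Kb) by (apply HK; lra). pose proof (Rabs_pos kk).
        rewrite <- (pow2_abs kk). apply pow_incr. lra. }
      assert (0 <= kk ^ 2 * (sigma2 + 2 * sigma1 * (w + kk)) ^ 2)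
        by (apply Rmult_le_pos; apply pow2_ge_0).
      assert (E1 : -2 * (sigma1 * kk ^ 2 * w + sigma1 * kk ^ 3 + sigma2 * kk ^ 2) * (w + kk)
         = sigma2 ^ 2 * kk ^ 2 / (2 * sigma1) - kk ^ 2 * (sigma2 + 2 * sigma1 * (w + kk)) ^ 2 / (2 * sigma1))
        by (field; lra).
      rewrite E1.
      assert (0 <= kk ^ 2 * (sigma2 + 2 * sigma1 * (w + kk)) ^ 2 / (2 * sigma1))
        by (apply Rdiv_le_0_compat; lra).
      assert (sigma2 ^ 2 * kk ^ 2 / (2 * sigma1) <= sigma2 ^ 2 * Kb ^ 2 / (2 * sigma1)).
      { unfold Rdiv. apply Rmult_le_compat_r. left; apply Rinv_0_lt_compat; lra.
        apply Rmult_le_compat_l; auto. apply pow2_ge_0. }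
      lra.
    - rewrite RInt_constR. unfold c. right. field. lra. }
  destruct (MVT_gen (fun r => E (clamp r)) 0 t0 (fun s => Rmin (D s) c)) as [xi [Hxi Hm]].
  - rewrite Rmin_left, Rmax_right by lra. intros x Hx.
    rewrite Rmin_left by (apply HD; auto).
    apply is_derive_ext_loc with (f := E).
    + assert (Hp : 0 < Rmin x (tau - x)) by (apply Rmin_pos; lra).
      exists (mkposreal _ Hp). intros y Hy. unfold ball in Hy; simpl in Hy.
      unfold AbsRing_ball, abs, minus, plus, opp in Hy; simpl in Hy.
      apply Rabs_lt_between in Hy. pose proof (Rmin_l x (tau - x)); pose proof (Rmin_r x (tau - x)).
      rewrite clamp_id; auto. lra.
    + apply Ederiv. lra.
  - intros; apply Ec_cont.
  - rewrite !clamp_id in Hm by lra.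
    pose proof (Rmin_r (D xi) c). 
    assert (Rmin (D xi) c * (t0 - 0) <= c * t0) by (rewrite Rminus_0_r; apply Rmult_le_compat_r; lra).
    fold c. lra.
Qed.


Lemma kred t x : 0 <= t <= tau -> exists y, 0 <= y <= 2 * PI /\ k x t = k y t.
Proof. intros Ht. apply (per_red (fun x => k x t) (2 * PI) PIpos2). intros; apply Hper; auto. Qed.

Lemma min_principle t x : 0 <= t <= tau -> k0 < k x t.
Proof.
  set (S := fun s => 0 <= s <= tau /\ forall r x, 0 <= r <= s -> k0 < k x r).
  assert (HS0 : S 0).
  { split. lra. intros r y Hr. replace r with 0 by lra. apply Hinit. }
  assert (HSb : bound S) by (exists tau; intros s [Hs _]; lra).
  destruct (completeness S HSb (ex_intro _ 0 HS0)) as [ts [Hub Hlub]].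
  assert (Hts0 : 0 <= ts) by (apply Hub; auto).
  assert (Htst : ts <= tau) by (apply Hlub; intros s [Hs _]; lra).
  assert (P1 : forall r y, 0 <= r < ts -> k0 < k y r).
  { intros r y Hr. destruct (classic (exists s, S s /\ r < s)) as [[s [[_ Hs] Hrs]]|Hn].
    - apply Hs; lra.
    - exfalso. assert (ts <= r); [|lra]. apply Hlub. intros s Hs.
      destruct (Rle_or_lt s r); auto. exfalso; apply Hn; eauto. }
  assert (HM := M0pos).
  assert (P2 : forall y, k0 <= k y ts).
  { intros y. destruct (Req_dec ts 0) as [->|Hnz]. left; apply Hinit.
    destruct (Rle_or_lt k0 (k y ts)) as [|Hlt]; auto. exfalso.
    destruct (hpow_small beta (proj1 Hb) ((k0 - k y ts) / (M0 + 1))) as [d [Hd Hd']].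
    { apply Rdiv_lt_0_compat; lra. }
    set (r := ts - Rmin d ts / 2).
    assert (Hm : 0 < Rmin d ts) by (apply Rmin_pos; lra).
    pose proof (Rmin_l d ts); pose proof (Rmin_r d ts).
    assert (Hr : 0 <= r < ts) by (unfold r; lra).
    specialize (P1 r y Hr).
    assert (hpow (Rabs (r - ts)) beta < (k0 - k y ts) / (M0 + 1)).
    { apply Hd'. split. apply Rabs_pos. unfold r. rewrite Rabs_left by lra. lra. }
    pose proof (hmod_time (fun t => 0 <= t <= tau) k r ts y Hk ltac:(lra) ltac:(lra)).
    apply Rabs_le_between in H2.
    pose proof (hpow_nonneg (Rabs (r - ts)) beta).
    assert (M0 * hpow (Rabs (r - ts)) beta <= (M0 + 1) * hpow (Rabs (r - ts)) beta) by nra.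
    assert ((M0 + 1) * hpow (Rabs (r - ts)) beta < k0 - k y ts).
    { apply Rmult_lt_compat_l with (r := M0 + 1) in H1; [|lra].
      replace ((M0 + 1) * ((k0 - k y ts) / (M0 + 1))) with (k0 - k y ts) in H1 by (field; lra). lra. }
    lra. }
  assert (Hall : forall y, k0 < k y ts).
  { destruct (classic (exists y, k y ts <= k0)) as [[y Hy]|Hn].
    2:{ intros y. destruct (Rle_or_lt (k y ts) k0); auto. exfalso; eauto. }
    exfalso. assert (Heq : k y ts = k0) by (specialize (P2 y); lra).
    assert (Htsp : 0 < ts).
    { destruct (Req_dec ts 0) as [->|]; [|lra]. specialize (Hinit y). lra. }
    assert (T2 : 0 <= d_th (d_th k) y ts).
    { apply (min_d2 (fun x => k x ts) (fun x => d_th k x ts) y).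
      - intros; apply isK1; lra.
      - apply isK2; lra.
      - intros z. rewrite Heq. apply P2. }
    assert (T1 : d_t k y ts <= 0).
    { apply (left_deriv_sign (fun s => k y s) ts _ ts). apply isKt; lra. auto.
      intros r Hr. rewrite Heq. left. apply P1; lra. }
    rewrite Hpde in T1 by lra. rewrite Heq in T1.
    assert (0 < sigma1 * k0 ^ 3 + sigma2 * k0 ^ 2).
    { assert (0 < k0 ^ 2) by (apply pow_lt; lra). assert (0 < k0 ^ 3) by (apply pow_lt; lra).
      pose proof (Rmult_lt_0_compat _ _ Hs1 H0). pose proof (Rmult_lt_0_compat _ _ Hs2 H). lra. }
    assert (0 <= sigma1 * k0 ^ 2 * d_th (d_th k) y ts).
    { apply Rmult_le_pos; auto. apply Rmult_le_pos; [lra|apply pow2_ge_0]. }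
    lra. }
  assert (Htau' : ts = tau).
  { destruct (Req_dec ts tau) as [|Hne]; auto. exfalso.
    destruct (continuity_ab_min (fun x => k x ts) 0 (2 * PI)) as [xm [Hxm _]].
    { pose proof PIpos2; lra. }
    { intros; apply cK; lra. }
    set (m := k xm ts).
    assert (Hmin : forall y, m <= k y ts).
    { intros y. destruct (kred ts y) as [z [Hz Hz']]. lra. rewrite Hz'. apply Hxm; auto. }
    assert (Hmk : k0 < m) by apply Hall.
    destruct (hpow_small beta (proj1 Hb) ((m - k0) / (M0 + 1))) as [d [Hd Hd']].
    { apply Rdiv_lt_0_compat; lra. }
    set (s' := ts + Rmin d (tau - ts) / 2).
    assert (Hm : 0 < Rmin d (tau - ts)) by (apply Rmin_pos; lra).
    pose proof (Rmin_l d (tau - ts)); pose proof (Rmin_r d (tau - ts)).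
    assert (S s').
    { split. unfold s'; lra. intros r y Hr.
      destruct (Rlt_or_le r ts). apply P1; lra.
      assert (hpow (Rabs (r - ts)) beta < (m - k0) / (M0 + 1)).
      { apply Hd'. split. apply Rabs_pos. rewrite Rabs_pos_eq by lra. unfold s' in Hr; lra. }
      pose proof (hmod_time (fun t => 0 <= t <= tau) k r ts y Hk ltac:(unfold s' in *; lra) ltac:(lra)).
      apply Rabs_le_between in H3.
      pose proof (hpow_nonneg (Rabs (r - ts)) beta).
      assert (M0 * hpow (Rabs (r - ts)) beta <= (M0 + 1) * hpow (Rabs (r - ts)) beta) by nra.
      assert ((M0 + 1) * hpow (Rabs (r - ts)) beta < m - k0).
      { apply Rmult_lt_compat_l with (r := M0 + 1) in H2; [|lra].
        replace ((M0 + 1) * ((m - k0) / (M0 + 1))) with (m - k0) in H2 by (field; lra). lra. }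
      specialize (Hmin y). lra. }
    specialize (Hub s' H1). unfold s' in Hub. lra. }
  intros Ht. destruct (Rlt_or_le t ts). apply P1; lra.
  replace t with ts by lra. apply Hall.
Qed.


Lemma RInt_ChaslesR (f : R -> R) a b c : ex_RInt f a b -> ex_RInt f b c -> RInt f a b + RInt f b c = RInt f a c.
Proof. intros. exact (RInt_Chasles f a b c H H0). Qed.

Lemma cLn t x : 0 <= t <= tau -> continuity_pt (fun x => ln (k x t)) x.
Proof.
  intros Ht. eapply cp_of_derive.
  apply (is_derive_comp ln (fun x => k x t) x). apply is_derive_ln.
  pose proof (min_principle t x Ht); lra. apply isK1; auto.
Qed.

Lemma arc s x1 A : 0 <= s <= tau -> 0 < A -> 2 * PI <= A ^ 2 ->
  (forall y, k y s <= k x1 s) ->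
  k x1 s <= exp (4 * (C1 + 2 * PI * Rabs (ln k0)) * A ^ 2) \/
  (k x1 s - exp (4 * (C1 + 2 * PI * Rabs (ln k0)) * A ^ 2)) ^ 2 <=
     RInt (fun x => d_th k x s ^ 2) 0 (2 * PI) / (4 * A ^ 2).
Proof.
  intros Hs HA HA2 Hmax.
  set (B := C1 + 2 * PI * Rabs (ln k0)).
  set (Ml := exp (4 * B * A ^ 2)).
  pose proof PIpos2 as HP.
  set (f := fun x => ln (k x s) + Rabs (ln k0)).
  assert (Cf : forall x, continuity_pt f x) by (intros; apply cp_plus; [apply cLn; auto|apply cp_const]).
  assert (Pf : forall x, f (x + 2 * PI) = f x) by (intros; unfold f; rewrite Hper; auto).
  assert (fpos : forall x, 0 < f x).
  { intros x. unfold f. pose proof (min_principle s x Hs).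
    assert (ln k0 < ln (k x s)) by (apply ln_increasing; auto).
    pose proof (Rle_abs (- ln k0)). rewrite Rabs_Ropp in H1. lra. }
  assert (If : RInt f 0 (2 * PI) <= B).
  { unfold f. rewrite RInt_plusR. rewrite RInt_constR. unfold B.
    pose proof (HC1 s Hs). lra. apply exR; intros; apply cLn; auto. apply ex_RInt_const. }
  assert (Bpos : 0 < B).
  { destruct (continuity_ab_min f 0 (2 * PI)) as [xm [Hxm _]]. lra. intros; auto.
    pose proof (RInt_pos_lb f 0 (2 * PI) (f xm) ltac:(lra) (exR _ _ _ Cf)
      ltac:(intros; apply Hxm; lra)).
    pose proof (fpos xm). assert (0 < (2 * PI - 0) * f xm) by (apply Rmult_lt_0_compat; lra). lra. }
  assert (Iper : RInt f (x1 - 2 * PI) x1 = RInt f 0 (2 * PI)) by (apply RInt_per; auto).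
  assert (lnMl : ln Ml = 4 * B * A ^ 2) by (unfold Ml; apply ln_exp).
  assert (HMlpos : 0 < Ml) by (unfold Ml; apply exp_pos).
  destruct (Rle_or_lt (k x1 s) Ml) as [|Hgt]; [left; auto|right]. fold B Ml.
  set (S := fun y => x1 - 2 * PI <= y <= x1 /\ k y s <= Ml).
  assert (Sne : exists y, S y).
  { apply NNPP. intros Hn.
    assert (H : forall y, x1 - 2 * PI < y < x1 -> 4 * B * A ^ 2 <= f y).
    { intros y Hy. destruct (Rle_or_lt (k y s) Ml).
      - exfalso. apply Hn. exists y. split; auto. lra.
      - unfold f. rewrite <- lnMl. pose proof (Rabs_pos (ln k0)).
        assert (ln Ml < ln (k y s)) by (apply ln_increasing; auto). lra. }
    pose proof (RInt_pos_lb f (x1 - 2 * PI) x1 (4 * B * A ^ 2) ltac:(lra) (exR _ _ _ Cf) H).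
    rewrite Iper in H0. replace (x1 - (x1 - 2 * PI)) with (2 * PI) in H0 by ring.
    assert (1 < 2 * PI * (4 * A ^ 2)).
    { assert (2 * PI * (4 * A ^ 2) >= 2 * PI * (4 * (2 * PI))) by (apply Rmult_ge_compat_l; lra).
      pose proof PI_RGT_0. pose proof (PI2_3_2). nra. }
    assert (B < 2 * PI * (4 * B * A ^ 2)) by nra. lra. }
  assert (Sb : bound S) by (exists x1; intros y [Hy _]; lra).
  destruct (completeness S Sb Sne) as [a [Hub Hlub]].
  assert (Ha1 : a <= x1) by (apply Hlub; intros y [Hy _]; lra).
  assert (Ha0 : x1 - 2 * PI <= a) by (destruct Sne as [y Hy]; pose proof (Hub y Hy); destruct Hy; lra).
  assert (Hka : k a s <= Ml).
  { destruct (Rle_or_lt (k a s) Ml) as [|Hlt]; auto. exfalso.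
    assert (Hc := proj1 (continuity_pt_locally _ _) (cK s a Hs)).
    destruct (Hc (mkposreal (k a s - Ml) ltac:(lra))) as [d Hd].
    assert (a <= a - d / 2); [|pose proof (cond_pos d); lra].
    apply Hlub. intros y [Hy1 Hy2].
    pose proof (Hub y (conj Hy1 Hy2)).
    destruct (Rle_or_lt y (a - d / 2)); auto. exfalso.
    assert (ball a d y).
    { unfold ball; simpl; unfold AbsRing_ball, abs, minus, plus, opp; simpl.
      pose proof (cond_pos d). rewrite Rabs_left1 by lra. lra. }
    specialize (Hd y H1). simpl in Hd. apply Rabs_lt_between in Hd. lra. }
  assert (Hright : forall y, a < y <= x1 -> Ml < k y s).
  { intros y Hy. destruct (Rle_or_lt (k y s) Ml); auto. exfalso.
    assert (S y) by (split; auto; lra). pose proof (Hub y H0). lra. }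
  assert (Hal : a < x1) by (destruct (Req_dec a x1); [subst; lra|lra]).
  set (l := x1 - a).
  (* Chebyshev *)
  assert (Hl : l * (4 * B * A ^ 2) <= B).
  { assert (Ch := RInt_Chasles f (x1 - 2 * PI) a x1 (exR _ _ _ Cf) (exR _ _ _ Cf)).
    unfold plus in Ch; simpl in Ch.
    assert (0 <= RInt f (x1 - 2 * PI) a).
    { apply RInt_ge0; auto. apply exR; auto. intros; left; auto. }
    assert (l * (4 * B * A ^ 2) <= RInt f a x1).
    { apply RInt_pos_lb. lra. apply exR; auto. intros y Hy.
      unfold f. rewrite <- lnMl. pose proof (Rabs_pos (ln k0)).
      assert (ln Ml < ln (k y s)) by (apply ln_increasing; auto; apply Hright; lra). lra. }
    lra. }
  assert (Hl' : l <= / (4 * A ^ 2)).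
  { assert (0 < 4 * A ^ 2) by (assert (0 < A ^ 2) by (apply pow_lt; auto); lra).
    apply Rmult_le_reg_r with (r := 4 * A ^ 2 * B). apply Rmult_lt_0_compat; auto.
    replace (/ (4 * A ^ 2) * (4 * A ^ 2 * B)) with B by (field; lra).
    replace (l * (4 * A ^ 2 * B)) with (l * (4 * B * A ^ 2)) by ring. lra. }
  assert (FTC : RInt (fun x => d_th k x s) a x1 = k x1 s - k a s).
  { apply (@is_RInt_unique R_CompleteNormedModule).
    apply (is_RInt_derive (fun x => k x s)).
    - intros; apply isK1; auto.
    - intros; apply continuity_pt_filterlim; apply cK1; auto. }
  assert (CS := RInt_CS (fun x => d_th k x s) a x1 Hal (fun x => cK1 s x Hs)).
  rewrite FTC in CS.
  assert (C2 : forall x, continuity_pt (fun x => d_th k x s ^ 2) x) by (intros; apply cp_sq; apply cK1; auto).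
  assert (Hsub : RInt (fun x => d_th k x s ^ 2) a x1 <= RInt (fun x => d_th k x s ^ 2) 0 (2 * PI)).
  { rewrite <- (RInt_per _ (2 * PI) x1) by (auto; intros; rewrite per1; auto).
    assert (Ch := RInt_ChaslesR (fun x => d_th k x s ^ 2) (x1 - 2 * PI) a x1 (exR _ _ _ C2) (exR _ _ _ C2)).
    assert (0 <= RInt (fun x => d_th k x s ^ 2) (x1 - 2 * PI) a).
    { apply RInt_ge0; auto. apply exR; auto. intros; apply pow2_ge_0. }
    lra. }
  assert (HP2 : 0 <= RInt (fun x => d_th k x s ^ 2) a x1).
  { apply RInt_ge0. lra. apply exR; auto. intros; apply pow2_ge_0. }
  assert ((k x1 s - Ml) ^ 2 <= (k x1 s - k a s) ^ 2).
  { apply pow_incr. lra. }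
  assert (0 < 4 * A ^ 2) by (assert (0 < A ^ 2) by (apply pow_lt; auto); lra).
  assert (l * RInt (fun x => d_th k x s ^ 2) a x1 <= / (4 * A ^ 2) * RInt (fun x => d_th k x s ^ 2) 0 (2 * PI)).
  { apply Rmult_le_compat; auto. unfold l; lra. }
  unfold Rdiv. rewrite Rmult_comm. fold l in CS. lra.
Qed.


Lemma bound_tau t0 A x : 0 <= t0 <= tau -> 0 < A -> 2 * PI + PI * sigma2 ^ 2 * tau / sigma1 <= A ^ 2 ->
  k x t0 <= 2 * exp (4 * (C1 + 2 * PI * Rabs (ln k0)) * A ^ 2) + / A * sqrt (E 0).
Proof.
  intros Ht0 HA HA2.
  pose proof PIpos2 as HP.
  assert (Hex : forall s, exists x, 0 <= x <= 2 * PI /\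
            (0 <= s <= tau -> forall y, 0 <= y <= 2 * PI -> k y s <= k x s)).
  { intros s. destruct (classic (0 <= s <= tau)) as [Hs|Hs].
    - destruct (continuity_ab_maj (fun x => k x s) 0 (2 * PI)) as [xm [H1 H2]]. lra.
      intros; apply cK; auto. exists xm; split; auto.
    - exists 0. split. lra. intros; contradiction. }
  set (g := fun s => proj1_sig (constructive_indefinite_description _ (Hex s))).
  assert (Hg : forall s, 0 <= g s <= 2 * PI /\
            (0 <= s <= tau -> forall y, 0 <= y <= 2 * PI -> k y s <= k (g s) s)).
  { intros s. unfold g. destruct (constructive_indefinite_description _ (Hex s)); simpl; auto. }
  assert (Hgmax : forall s y, 0 <= s <= tau -> k y s <= k (g s) s).
  { intros s y Hs. destruct (kred s y Hs) as [z [Hz ->]]. apply Hg; auto. }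
  set (G := fun s => k (g (clamp s)) (clamp s)).
  assert (CG : forall s, continuity_pt G s).
  { intros s. apply (mod_cont _ s M0 beta). lra. intros r. unfold G.
    pose proof (clamp_in r) as Hr. pose proof (clamp_in s) as Hs'.
    assert (M0 * hpow (Rabs (clamp r - clamp s)) beta <= M0 * hpow (Rabs (r - s)) beta).
    { apply Rmult_le_compat_l. apply M0pos. apply hpow_mono. lra. split. apply Rabs_pos. apply clamp_lip. }
    pose proof (hmod_time _ k (clamp r) (clamp s) (g (clamp s)) Hk Hr Hs').
    pose proof (hmod_time _ k (clamp r) (clamp s) (g (clamp r)) Hk Hr Hs').
    pose proof (Hgmax (clamp r) (g (clamp s)) Hr). pose proof (Hgmax (clamp s) (g (clamp r)) Hs').
    apply Rabs_le_between in H0. apply Rabs_le_between in H1.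
    apply Rabs_le_between. lra. }
  destruct (continuity_ab_maj G 0 t0) as [ss [Hss' Hss]]. lra. intros; auto.
  set (x1 := g ss). set (Kx := k x1 ss).
  assert (HGss : G ss = Kx) by (unfold G, Kx, x1; rewrite clamp_id; auto; lra).
  assert (Hall : forall y s, 0 <= s <= t0 -> k y s <= Kx).
  { intros y s Hs. rewrite <- HGss. eapply Rle_trans. apply (Hgmax s y). lra.
    replace (k (g s) s) with (G s). apply Hss'; auto. unfold G; rewrite clamp_id; auto; lra. }
  assert (Habs : forall y s, 0 <= s <= ss -> Rabs (k y s) <= Kx).
  { intros y s Hs. rewrite Rabs_pos_eq. apply Hall; lra. left; eapply Rlt_trans; [apply Hk0|]. apply min_principle; lra. }
  assert (HKx0 : 0 < Kx) by (unfold Kx; eapply Rlt_trans; [apply Hk0|]; apply min_principle; lra).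
  assert (Hq : 0 <= sqrt (E 0)) by apply sqrt_pos.
  assert (Hq2 : E 0 <= sqrt (E 0) ^ 2).
  { destruct (Rle_or_lt 0 (E 0)). simpl. rewrite Rmult_1_r, sqrt_sqrt; lra.
    rewrite sqrt_neg_0 by lra. simpl. lra. }
  assert (HMl : 0 < exp (4 * (C1 + 2 * PI * Rabs (ln k0)) * A ^ 2)) by apply exp_pos.
  assert (HAq : 0 <= / A * sqrt (E 0)) by (apply Rmult_le_pos; auto; left; apply Rinv_0_lt_compat; auto).
  assert (Hx : k x t0 <= Kx) by (apply Hall; lra).
  assert (HA2' : 2 * PI <= A ^ 2).
  { assert (0 <= PI * sigma2 ^ 2 * tau / sigma1).
    { apply Rdiv_le_0_compat; [|lra]. apply Rmult_le_pos; [apply Rmult_le_pos|]; try lra. apply pow2_ge_0. }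
    lra. }
  destruct (arc ss x1 A ltac:(lra) HA HA2' (fun y => Hgmax ss y ltac:(lra))) as [H1|H1];
    fold Kx in H1.
  - lra.
  - set (Ml := exp (4 * (C1 + 2 * PI * Rabs (ln k0)) * A ^ 2)) in *.
    set (q := sqrt (E 0)) in *.
    set (P := RInt (fun x => d_th k x ss ^ 2) 0 (2 * PI)) in *.
    assert (HPE : P = E ss + RInt (fun x => k x ss ^ 2) 0 (2 * PI)).
    { unfold P, E. rewrite RInt_minusR. lra.
      apply exR; intros; apply cp_sq; apply cK1; lra.
      apply exR; intros; apply cp_sq; apply cK; lra. }
    assert (Hksq : RInt (fun x => k x ss ^ 2) 0 (2 * PI) <= 2 * PI * Kx ^ 2).
    { eapply Rle_trans. apply RInt_le with (g := fun _ => Kx ^ 2). lra.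
      apply exR; intros; apply cp_sq; apply cK; lra. apply ex_RInt_const.
      intros y _. rewrite <- (pow2_abs (k y ss)). apply pow_incr. split. apply Rabs_pos. apply Habs; lra.
      rewrite RInt_constR. right; ring. }
    assert (HEs := Eineq ss Kx ltac:(lra) Habs).
    assert (Hst : PI * sigma2 ^ 2 * Kx ^ 2 / sigma1 * ss <= PI * sigma2 ^ 2 * tau / sigma1 * Kx ^ 2).
    { assert (0 <= PI * sigma2 ^ 2 * Kx ^ 2 / sigma1).
      { apply Rdiv_le_0_compat; [|lra]. apply Rmult_le_pos; [apply Rmult_le_pos|]; try lra; apply pow2_ge_0. }
      replace (PI * sigma2 ^ 2 * tau / sigma1 * Kx ^ 2) with (PI * sigma2 ^ 2 * Kx ^ 2 / sigma1 * tau) by (field; lra).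
      apply Rmult_le_compat_l; lra. }
    assert (HPb : P <= q ^ 2 + (A * Kx) ^ 2).
    { assert (Kx ^ 2 * (2 * PI + PI * sigma2 ^ 2 * tau / sigma1) <= Kx ^ 2 * A ^ 2).
      { apply Rmult_le_compat_l; auto. apply pow2_ge_0. }
      rewrite Rpow_mult_distr. nra. }
    assert (H4A : 0 < 4 * A ^ 2) by (assert (0 < A ^ 2) by (apply pow_lt; auto); lra).
    assert (Hsq : (Kx - Ml) ^ 2 <= ((q + A * Kx) / (2 * A)) ^ 2).
    { eapply Rle_trans. apply H1.
      replace (((q + A * Kx) / (2 * A)) ^ 2) with ((q + A * Kx) ^ 2 / (4 * A ^ 2)) by (field; lra).
      unfold Rdiv. apply Rmult_le_compat_r. left; apply Rinv_0_lt_compat; auto.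
      assert (0 <= q * (A * Kx)) by (apply Rmult_le_pos; nra). nra. }
    assert (Hlin : Kx - Ml <= (q + A * Kx) / (2 * A)).
    { destruct (Rle_or_lt (Kx - Ml) 0). 
      - assert (0 <= (q + A * Kx) / (2 * A)) by (apply Rdiv_le_0_compat; nra). lra.
      - apply Rsqr_incr_0_var. unfold Rsqr. simpl in Hsq. lra.
        apply Rdiv_le_0_compat; nra. }
    replace ((q + A * Kx) / (2 * A)) with (/ A * q / 2 + Kx / 2) in Hlin by (field; lra).
    lra.
Qed.

End Main.

Theorem proposition3p10
  (sigma1 sigma2 beta T k0 C1 : R) (k : R -> R -> R) (psi : R -> R) :
  0 < sigma1 -> 0 < sigma2 -> 0 < beta < 1 -> 0 < T ->
  (forall th t, 0 <= t < T -> k (th + 2 * PI) t = k th t) ->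
  (forall eps, 0 < eps < T -> C2b1b beta (T - eps) k) ->
  (forall th t, 0 < t < T ->
     d_t k th t = sigma1 * (k th t) ^ 2 * d_th (d_th k) th t
                  + sigma1 * (k th t) ^ 3 + sigma2 * (k th t) ^ 2) ->
  (forall th, k th 0 = psi th) ->
  C1b beta psi ->
  (forall th, 0 < psi th) ->
  RInt (fun th => cos th / psi th) 0 (2 * PI) = 0 ->
  RInt (fun th => sin th / psi th) 0 (2 * PI) = 0 ->
  0 < k0 ->
  (forall th, k0 < k th 0) ->
  (forall t, 0 <= t < T -> RInt (fun th => ln (k th t)) 0 (2 * PI) <= C1) ->
  (forall t, 0 <= t < T -> forall th,
     k th t <=
       2 * exp (4 * (C1 + 2 * PI * Rabs (ln k0))
                  * (sqrt (2 * PI) + sigma2 * sqrt (PI * T / sigma1)) ^ 2)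
       + / (sqrt (2 * PI) + sigma2 * sqrt (PI * T / sigma1))
         * sqrt (RInt (fun th' => (d_th k th' 0) ^ 2 - (k th' 0) ^ 2) 0 (2 * PI)))
  /\
  (exists M, forall th t, 0 <= t < T -> Rabs (k th t) <= M).
Proof.
  intros Hs1 Hs2 Hb HT Hper Hreg Hpde _ _ _ _ _ Hk0 Hinit HC1.
  set (A := sqrt (2 * PI) + sigma2 * sqrt (PI * T / sigma1)).
  pose proof PI_RGT_0 as HPI.
  assert (Hs2pi : 0 < sqrt (2 * PI)) by (apply sqrt_lt_R0; lra).
  assert (HsT : 0 <= sqrt (PI * T / sigma1)) by apply sqrt_pos.
  assert (HA : 0 < A) by (unfold A; pose proof (Rmult_le_pos _ _ (Rlt_le _ _ Hs2) HsT); lra).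
  assert (HA2 : forall tau, tau < T -> 2 * PI + PI * sigma2 ^ 2 * tau / sigma1 <= A ^ 2).
  { intros tau Htau. unfold A.
    assert (E1 : sqrt (2 * PI) * sqrt (2 * PI) = 2 * PI) by (apply sqrt_sqrt; lra).
    assert (E2 : sqrt (PI * T / sigma1) * sqrt (PI * T / sigma1) = PI * T / sigma1).
    { apply sqrt_sqrt. apply Rdiv_le_0_compat; nra. }
    assert (PI * sigma2 ^ 2 * tau / sigma1 <= sigma2 ^ 2 * (PI * T / sigma1)).
    { unfold Rdiv. rewrite <- Rmult_assoc. 
      replace (sigma2 ^ 2 * (PI * T) * / sigma1) with (PI * sigma2 ^ 2 * T * / sigma1) by ring.
      apply Rmult_le_compat_r. left; apply Rinv_0_lt_compat; auto.
      apply Rmult_le_compat_l. apply Rmult_le_pos. lra. apply pow2_ge_0. lra. }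
    assert (0 <= sqrt (2 * PI) * (sigma2 * sqrt (PI * T / sigma1))).
    { apply Rmult_le_pos. lra. apply Rmult_le_pos; lra. }
    simpl. nra. }
  assert (Main : forall t, 0 <= t < T -> forall th,
     k th t <= 2 * exp (4 * (C1 + 2 * PI * Rabs (ln k0)) * A ^ 2)
       + / A * sqrt (RInt (fun th' => (d_th k th' 0) ^ 2 - (k th' 0) ^ 2) 0 (2 * PI))).
  { intros t0 Ht0 th.
    set (eps := (T - t0) / 2).
    assert (Heps : 0 < eps < T) by (unfold eps; lra).
    destruct (Hreg eps Heps) as [HD1 [HDt [M0 [Hk [Hk1 [Hk2 Hkt]]]]]].
    set (tau := T - eps) in *.
    assert (Htau : 0 < tau) by (unfold tau, eps; lra).
    assert (Htt : t0 <= tau) by (unfold tau, eps; lra).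
    assert (HtT : tau < T) by (unfold tau; lra).
    exact (bound_tau sigma1 sigma2 beta tau k0 C1 M0 k Hs1 Hs2 Hb Htau
      (fun th t H => Hper th t ltac:(lra)) HD1 HDt Hk Hk2 Hkt
      (fun th t H => Hpde th t ltac:(lra)) Hk0 Hinit (fun t H => HC1 t ltac:(lra))
      t0 A th ltac:(lra) HA (HA2 tau HtT)). }
  assert (Pos : forall t, 0 <= t < T -> forall th, 0 < k th t).
  { intros t0 Ht0 th.
    set (eps := (T - t0) / 2).
    assert (Heps : 0 < eps < T) by (unfold eps; lra).
    destruct (Hreg eps Heps) as [HD1 [HDt [M0 [Hk [Hk1 [Hk2 Hkt]]]]]].
    set (tau := T - eps) in *.
    assert (Htau : 0 < tau) by (unfold tau, eps; lra).
    assert (Htt : t0 <= tau) by (unfold tau, eps; lra).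
    assert (HtT : tau < T) by (unfold tau; lra).
    pose proof (min_principle sigma1 sigma2 beta tau k0 M0 k Hs1 Hs2 Hb Htau
      (fun th t H => Hper th t ltac:(lra)) HD1 HDt Hk
      (fun th t H => Hpde th t ltac:(lra)) Hk0 Hinit t0 th ltac:(lra)). lra. }
  split.
  - exact Main.
  - eexists. intros th t Ht. rewrite Rabs_pos_eq. apply Main; auto.
    left; apply Pos; auto.
Qed.
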